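(* Define on $\mathbb{D}$ the harmonic mapping $f_D=h_D+\overline{g_D}$, where $$h_D(z)=\tfrac14\log\frac{1+z}{1-z}-\tfrac{i}{4}\log\frac{1+iz}{1-iz},\qquad g_D(z)=-\tfrac14\log\frac{1+z}{1-z}-\tfrac{i}{4}\log\frac{1+iz}{1-iz}.$$ Define also $f_C=h_C+\overline{g_C}$, where $$h_C(z)=\tfrac14\log\frac{1+z}{1-z}+\tfrac12\,\frac{z}{1-z^2},\qquad g_C(z)=\tfrac14\log\frac{1+z}{1-z}-\tfrac12\,\frac{z}{1-z^2}.$$ Both $f_D$ and $f_C$ have dilatation $\omega(z)=-z^2$. For every $t\in[0,1]$, the harmonic mapping $f_t=(1-t)f_D+tf_C$ is univalent on $\mathbb{D}$.
   Context: $\mathbb{D}=\{z\in\mathbb{C}:|z|<1\}$, and $\log$ denotes the principal branch. For $z\in\mathbb{D}$ the quantities $(1+z)/(1-z)$ and $(1+iz)/(1-iz)$ lie in the right half-plane. The dilatation of a harmonic mapping $h+\overline{g}$ is $g'/h'$. *)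

(* Defs.v *)
From HB Require Import structures.
From mathcomp Require Import all_boot all_order all_algebra.
From mathcomp Require Import all_classical all_reals.
From mathcomp Require Import exp trigo.
From mathcomp Require Export complex.
Set Implicit Arguments. Unset Strict Implicit. Unset Printing Implicit Defensive.
Import Order.TTheory GRing.Theory Num.Theory.
Local Open Scope ring_scope.
Local Open Scope complex_scope.

Section Defs.
Variable R : realType.

(* Principal argument Arg w in (-pi, pi], with Arg 0 = 0. *)
Definition Arg (w : R[i]) : R :=
  let a := complex.Re w in let b := complex.Im w in
  if 0 < a then atan (b / a)
  else if a < 0 then (if 0 <= b then atan (b / a) + pi else atan (b / a) - pi)
  else if 0 < b then pi / 2
  else if b < 0 then - (pi / 2) else 0.

Definition Clog (w : R[i]) : R[i] :=
  (ln (Num.sqrt (complex.Re w ^+ 2 + complex.Im w ^+ 2)))%:C + 'i * (Arg w)%:C.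

Definition unit_disk : set R[i] := [set z | `|z| < 1].

Definition L1 (z : R[i]) : R[i] := Clog ((1 + z) / (1 - z)).
Definition L2 (z : R[i]) : R[i] := Clog ((1 + 'i * z) / (1 - 'i * z)).

Definition hD (z : R[i]) : R[i] := 4^-1 * L1 z - 'i / 4%:R * L2 z.
Definition gD (z : R[i]) : R[i] := - (4^-1 * L1 z) - 'i / 4%:R * L2 z.
Definition hC (z : R[i]) : R[i] := 4^-1 * L1 z + 2^-1 * (z / (1 - z ^+ 2)).
Definition gC (z : R[i]) : R[i] := 4^-1 * L1 z - 2^-1 * (z / (1 - z ^+ 2)).

Definition fD (z : R[i]) : R[i] := hD z + (gD z)^*.
Definition fC (z : R[i]) : R[i] := hC z + (gC z)^*.

Definition f_t (t : R) (z : R[i]) : R[i] := (1 - t)%:C * fD z + t%:C * fC z.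

Definition univalent_on_disk (f : R[i] -> R[i]) : Prop :=
  forall z1 z2, unit_disk z1 -> unit_disk z2 -> f z1 = f z2 -> z1 = z2.

End Defs.

(* Main.v *)
Require Import Defs.
From mathcomp Require Import all_boot all_order all_algebra.
From mathcomp Require Import all_classical all_reals.
From mathcomp Require Import topology normedtype derive realfun exp trigo.
From mathcomp Require Import complex ring lra.
Import Order.TTheory GRing.Theory Num.Theory.
Import numFieldNormedType.Exports.
Set Implicit Arguments. Unset Strict Implicit.
Local Open Scope classical_set_scope.
Local Open Scope ring_scope.

Lemma in_oo {R : realType} (a b x : R) : x \in `]a, b[ -> a < x /\ x < b.
Proof. by rewrite in_itv /= => /andP. Qed.
Lemma in_cc {R : realType} (a b x : R) : x \in `[a, b] -> a <= x /\ x <= b.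
Proof. by rewrite in_itv /= => /andP. Qed.

Lemma F2 {R : realType} (u2 u1 : R) : 0 < u2 -> u2 <= u1 -> atan u1 - atan u2 <= u2^-1 - u1^-1.
Proof.
move=> u20 le21.
pose phi := fun u : R => atan u + u^-1.
have D (x : R) : 0 < x -> is_derive x (1:R) phi ((1 + x ^+ 2)^-1 + (- x ^- 2 *: 1)).
  move=> x0; change (is_derive x (1:R) (atan + (fun u : R => u^-1)) ((1 + x ^+ 2)^-1 + (- x ^- 2 *: 1))); apply: is_deriveD.
  have := (@is_deriveV R id x 1 1 (lt0r_neq0 x0) (is_derive_id _ _)). exact.
have C : {within [set` `[u2, u1]%R], continuous phi}.
  apply: derivable_within_continuous => x hx; apply: ex_derive; apply: D.
  exact: lt_le_trans u20 (in_cc hx).1.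
have [c cI E] := @MVT_segment R phi (fun x => (1 + x ^+ 2)^-1 + (- x ^- 2 *: 1)) u2 u1 le21
   (fun x hx => D x (lt_trans u20 (in_oo hx).1)) C.
have c0 : 0 < c by apply: lt_le_trans u20 (in_cc cI).1.
move: E; rewrite /phi => E.
  have : (1 + c ^+ 2)^-1 + (- c ^- 2 *: 1) <= 0.
    have -> : (- c ^- 2 *: 1 : R) = - (c ^+ 2)^-1 by rewrite /GRing.scale /= mulr1.
    have c2 : 0 < c ^+ 2 by exact: exprn_gt0.
    rewrite subr_le0 lef_pV2 ?posrE //; first by rewrite lerDr ler01.
    by rewrite addrC ltr_wpDr.
  move=> H; have : (atan u1 + u1^-1) - (atan u2 + u2^-1) <= 0.
    rewrite E; apply: mulr_le0_ge0; [exact: H|by rewrite subr_ge0].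
lra.
Qed.

Lemma F3 {R : realType} (y2 y1 : R) : y2 <= y1 -> cos y2 - cos y1 <= y1 - y2.
Proof.
move=> le21.
pose psi := fun y : R => y + cos y.
have D (x : R) : is_derive x (1:R) psi (1 + - sin x).
  change (is_derive x (1:R) (id + cos) (1 + - sin x)).
  by apply: is_deriveD.
have C : {within [set` `[y2, y1]%R], continuous psi}.
  by apply: derivable_within_continuous => x _; apply: ex_derive; apply: D.
have [c cI E] := @MVT_segment R psi (fun x => 1 + - sin x) y2 y1 le21 (fun x _ => D x) C.
move: E; rewrite /psi => E.
  have : 0 <= (y1 + cos y1) - (y2 + cos y2).
    by rewrite E; apply: mulr_ge0; [rewrite subr_ge0 sin_le1|rewrite subr_ge0].
lra.
Qed.

Definition Af {R : realType} (t r y : R) := (1 - t) * atan ((r - r^-1) / (2 * cos y)) + t * ln r.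
Definition Gf {R : realType} (t r y : R) := (1 - t) * y + t * ((r + r^-1) / 2) * sin y.

Lemma cos_pos {R : realType} (y : R) : -(pi/2) < y < pi/2 -> 0 < cos y.
Proof. exact: cos_gt0_pihalf. Qed.

Lemma F4 {R : realType} (r1 r2 : R) : 0 < r1 -> r1 < r2 -> 1 <= r2 ->
  (r2 + r2^-1) / 2 - (r1 + r1^-1) / 2 <= (r2 - r2^-1) / 2 * (ln r2 - ln r1).
Proof.
move=> r10 r12 r21.
have r20 : 0 < r2 by lra.
have hl : 1 - r1 / r2 <= ln r2 - ln r1.
  have := @le_ln1Dx R (r1 / r2 - 1).
  rewrite [1 + _]addrC subrK ln_div ?posrE // => h.
  have : - 1 < r1 / r2 - 1 by have := divr_gt0 r10 r20; lra.
  move/h; lra.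
have s2 : 0 <= (r2 - r2^-1) / 2.
  apply: divr_ge0 => //; rewrite subr_ge0; apply: (le_trans _ r21).
  by rewrite invf_le1.
apply: le_trans (ler_wpM2l s2 hl).
rewrite -subr_ge0.
have -> : (r2 - r2^-1) / 2 * (1 - r1 / r2) - ((r2 + r2^-1) / 2 - (r1 + r1^-1) / 2)
   = (r2 - r1) ^+ 2 / (2 * r1 * r2 ^+ 2).
  by field; rewrite !lt0r_neq0.
by apply: divr_ge0; [exact: sqr_ge0|apply: mulr_ge0; [lra|exact: sqr_ge0]].
Qed.

Lemma inv_lt {R : realType} (r1 r2 : R) : 0 < r1 -> r1 < r2 -> r2^-1 < r1^-1.
Proof. by move=> r10 r12; rewrite ltf_pV2 ?posrE //; apply: lt_trans r12. Qed.

Lemma mono_r {R : realType} (t r1 r2 y : R) : 0 <= t <= 1 -> -(pi/2) < y < pi/2 ->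
  0 < r1 -> r1 < r2 -> Af t r1 y < Af t r2 y.
Proof.
move=> /andP[t0 t1] hy r10 r12.
have r20 : 0 < r2 by lra.
have cy := cos_pos hy.
have hi := inv_lt r10 r12.
have hu : (r1 - r1^-1) / (2 * cos y) < (r2 - r2^-1) / (2 * cos y).
  by rewrite ltr_pM2r ?invr_gt0 ?mulr_gt0 //; lra.
have ha := lt_atan hu.
have hl : ln r1 < ln r2 by rewrite ltr_ln ?posrE.
rewrite /Af; have [->|tn0] := eqVneq t 0; first by lra.
have tp : 0 < t by rewrite lt_neqAle eq_sym tn0.
nra.
Qed.

Lemma mono_y {R : realType} (t r y1 y2 : R) : 0 <= t <= 1 -> 0 < r ->
  -(pi/2) < y1 < pi/2 -> -(pi/2) < y2 < pi/2 -> y1 < y2 -> Gf t r y1 < Gf t r y2.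
Proof.
move=> /andP[t0 t1] r0 h1 h2 y12.
have hs : sin y1 < sin y2.
  by rewrite ltr_sin // in_itv /=; apply/andP; split; lra.
have c0 : 0 < (r + r^-1) / 2 by apply: divr_gt0 => //; apply: addr_gt0 => //; rewrite invr_gt0.
rewrite /Gf; have [->|tn0] := eqVneq t 0; first by lra.
have tp : 0 < t by rewrite lt_neqAle eq_sym tn0.
have : 0 < t * ((r + r^-1) / 2) by exact: mulr_gt0.
nra.
Qed.

Lemma myA_inv {R : realType} (t r y : R) : 0 < r -> Af t r^-1 y = - Af t r y.
Proof.
move=> r0; rewrite /Af invrK lnV ?posrE //.
have -> : (r^-1 - r) / (2 * cos y) = - ((r - r^-1) / (2 * cos y)) by rewrite -mulNr opprB.
rewrite atanN; lra.
Qed.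

Lemma myG_inv {R : realType} (t r y : R) : Gf t r^-1 y = Gf t r y.
Proof. by rewrite /Gf invrK [r^-1 + r]addrC. Qed.

Lemma myA_neg {R : realType} (t r y : R) : Af t r (- y) = Af t r y.
Proof. by rewrite /Af cosN. Qed.

Lemma myG_neg {R : realType} (t r y : R) : Gf t r (- y) = - Gf t r y.
Proof. rewrite /Gf sinN; lra. Qed.

Lemma myA_1 {R : realType} (t y : R) : Af t 1 y = 0.
Proof. by rewrite /Af invr1 subrr mul0r atan0 ln1 !mulr0 addr0. Qed.

Lemma myG_0 {R : realType} (t r : R) : Gf t r 0 = 0.
Proof. by rewrite /Gf sin0 !mulr0 addr0. Qed.

Ltac solve_nz := repeat (apply/andP; split); apply: lt0r_neq0; nra.

Lemma mycore {R : realType} (t r1 r2 y1 y2 : R) : 0 <= t <= 1 -> 1 < r1 -> r1 < r2 ->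
  0 < y1 < pi/2 -> 0 < y2 < pi/2 -> Af t r1 y1 = Af t r2 y2 ->
  Gf t r2 y2 < Gf t r1 y1.
Proof.
move=> /andP[t0 t1] r11 r12 /andP[y10 y1p] /andP[y20 y2p].
have pi0 := pi_gt0 R.
have r10 : 0 < r1 by lra.
have r20 : 0 < r2 by lra.
have r1i : r1^-1 < 1 by rewrite invf_lt1.
have r2i : r2^-1 < 1 by rewrite invf_lt1 //; lra.
have r1i0 : 0 < r1^-1 by rewrite invr_gt0.
have r2i0 : 0 < r2^-1 by rewrite invr_gt0.
have hi := inv_lt r10 r12.
have cy1 : 0 < cos y1 by apply: cos_pos; apply/andP; split; lra.
have cy2 : 0 < cos y2 by apply: cos_pos; apply/andP; split; lra.
set s1 := (r1 - r1^-1) / 2.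
set s2 := (r2 - r2^-1) / 2.
set c1 := (r1 + r1^-1) / 2.
set c2 := (r2 + r2^-1) / 2.
have s10 : 0 < s1 by rewrite /s1; apply: divr_gt0 => //; lra.
have s12 : s1 < s2 by rewrite /s1 /s2; lra.
have c10 : 0 < c1 by rewrite /c1; apply: divr_gt0 => //; lra.
set u1 := (r1 - r1^-1) / (2 * cos y1).
set u2 := (r2 - r2^-1) / (2 * cos y2).
have u10 : 0 < u1 by rewrite /u1; apply: divr_gt0; lra.
have u20 : 0 < u2 by rewrite /u2; apply: divr_gt0; lra.
have hu1 : cos y1 = s1 / u1.
  by rewrite /s1 -[u1]/((r1 - r1^-1) / (2 * cos y1)); field; solve_nz.
have hu2 : cos y2 = s2 / u2.
  by rewrite /s2 -[u2]/((r2 - r2^-1) / (2 * cos y2)); field; solve_nz.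
move=> E.
have hl : ln r1 < ln r2 by rewrite ltr_ln ?posrE.
have [t1e|tl1] := eqVneq t 1.
  move: E; rewrite /Af t1e subrr !mul0r !add0r !mul1r; lra.
have tl : t < 1 by rewrite lt_neqAle tl1.
move: E; rewrite /Af -/u1 -/u2; set a1 := atan u1; set a2 := atan u2 => E.
have E1 : (1 - t) * (a1 - a2) = t * (ln r2 - ln r1) by rewrite !mulrBr; lra.
have a12 : a2 <= a1.
  have : 0 <= (1 - t) * (a1 - a2) by rewrite E1; apply: mulr_ge0; lra.
  rewrite pmulr_rge0; [lra|lra].
have u21 : u2 <= u1.
  rewrite leNgt; apply/negP => h; have := lt_atan h; rewrite -/a1 -/a2; lra.
have f2 := F2 u20 u21; rewrite -/a1 -/a2 in f2.
set D := cos y2 - cos y1.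
have hD : D = s2 * (u2^-1 - u1^-1) + (s2 - s1) / u1 by rewrite /D hu1 hu2; field; solve_nz.
have iu : u1^-1 <= u2^-1 by rewrite lef_pV2 ?posrE.
have iu1 : 0 < u1^-1 by rewrite invr_gt0.
have D0 : 0 < D.
  rewrite hD; have : 0 < (s2 - s1) / u1 by apply: divr_gt0; lra.
  have : 0 <= s2 * (u2^-1 - u1^-1) by apply: mulr_ge0; lra.
  lra.
have y21 : y2 < y1.
  have : cos y1 < cos y2 by rewrite /D in D0; lra.
  by rewrite ltr_cos // in_itv /=; apply/andP; split; lra.
have sy : sin y2 < sin y1.
  by rewrite ltr_sin // in_itv /=; apply/andP; split; lra.
have sy1 : sin y1 <= 1 by exact: sin_le1.
have f3 := F3 (ltW y21); rewrite -/D in f3.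
have f4 := F4 r10 r12 (ltW (lt_trans r11 r12)); rewrite -/c1 -/c2 -/s2 in f4.
have c12 : c1 < c2.
  rewrite /c1 /c2; have : r2^-1 - r1^-1 = - (r2 - r1) / (r1 * r2) by field; solve_nz.
  move=> h.
  have : (r2 - r1) / (r1 * r2) < r2 - r1.
    have rr : 1 < r1 * r2 by nra.
    rewrite ltr_pdivrMr; last by nra.
    have : 0 < (r2 - r1) * (r1 * r2 - 1) by apply: mulr_gt0; lra.
    nra.
  lra.
have K1 : (1 - t) * s2 * (a1 - a2) <= (1 - t) * D.
  rewrite -mulrA; apply: ler_wpM2l; first lra.
  rewrite hD; have : 0 <= (s2 - s1) / u1 by apply: divr_ge0; lra.
  have : s2 * (a1 - a2) <= s2 * (u2^-1 - u1^-1) by apply: ler_wpM2l; lra.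
  lra.
have K2 : (1 - t) * s2 * (a1 - a2) = s2 * (t * (ln r2 - ln r1)) by rewrite -E1; ring.
have K3 : t * (c2 - c1) <= t * (s2 * (ln r2 - ln r1)) by apply: ler_wpM2l.
have K4 : (1 - t) * D <= (1 - t) * (y1 - y2) by apply: ler_wpM2l; lra.
rewrite /Gf -/c1 -/c2.
have [t0e|tn0] := eqVneq t 0.
  rewrite t0e; lra.
have tp : 0 < t by rewrite lt_neqAle eq_sym tn0.
have P : 0 < t * ((c2 - c1) * (1 - sin y2) + c1 * (sin y1 - sin y2)).
  apply: mulr_gt0 => //; apply: ltr_pwDl; first by apply: mulr_gt0; lra.
  by apply: mulr_ge0; lra.
nra.
Qed.

Lemma myA_pos {R : realType} (t r y : R) : 0 <= t <= 1 -> -(pi/2) < y < pi/2 -> 1 < r -> 0 < Af t r y.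
Proof. by move=> ht hy r1; rewrite -(myA_1 t y); apply: mono_r. Qed.
Lemma myA_negv {R : realType} (t r y : R) : 0 <= t <= 1 -> -(pi/2) < y < pi/2 -> 0 < r -> r < 1 -> Af t r y < 0.
Proof. by move=> ht hy r0 r1; rewrite -(myA_1 t y); apply: mono_r. Qed.
Lemma myG_pos {R : realType} (t r y : R) : 0 <= t <= 1 -> 0 < r -> 0 < y < pi/2 -> 0 < Gf t r y.
Proof.
move=> ht r0 /andP[y0 y1]; have pi0 := pi_gt0 R.
rewrite -(myG_0 t r); apply: mono_y => //; apply/andP; split; lra.
Qed.
Lemma myG_negv {R : realType} (t r y : R) : 0 <= t <= 1 -> 0 < r -> -(pi/2) < y < 0 -> Gf t r y < 0.
Proof.
move=> ht r0 /andP[y0 y1]; have pi0 := pi_gt0 R.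
rewrite -(myG_0 t r); apply: mono_y => //; apply/andP; split; lra.
Qed.

Lemma noLt1 {R : realType} (t r1 r2 y1 y2 : R) : 0 <= t <= 1 -> 1 < r1 -> r1 < r2 ->
  -(pi/2) < y1 < pi/2 -> -(pi/2) < y2 < pi/2 ->
  Af t r1 y1 = Af t r2 y2 -> Gf t r1 y1 = Gf t r2 y2 -> False.
Proof.
move=> ht r11 r12 /andP[a1 b1] /andP[a2 b2] EA EG.
have pi0 := pi_gt0 R.
have r10 : 0 < r1 by lra.
have r20 : 0 < r2 by lra.
have [y1p|y1n|y10] := ltgtP 0 y1.
- have g1 : 0 < Gf t r1 y1 by apply: myG_pos => //; apply/andP; split.
  have y2p : 0 < y2.
    rewrite ltNge; apply/negP => h; move: h; rewrite le_eqVlt => /orP[/eqP e|h].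
      by move: EG; rewrite e myG_0; lra.
    have := @myG_negv _ t r2 y2 ht r20; rewrite a2 h /= => /(_ isT); lra.
  have := mycore ht r11 r12 (y1 := y1) (y2 := y2) (ltac:(by apply/andP; split)) (ltac:(by apply/andP; split)) EA.
  lra.
- have g1 : Gf t r1 y1 < 0 by apply: myG_negv => //; apply/andP; split.
  have y2n : y2 < 0.
    rewrite ltNge; apply/negP => h; move: h; rewrite le_eqVlt => /orP[/eqP e|h].
      by move: EG; rewrite -e myG_0; lra.
    have := @myG_pos _ t r2 y2 ht r20; rewrite h b2 /= => /(_ isT); lra.
  have := mycore ht r11 r12 (y1 := - y1) (y2 := - y2)
     (ltac:(apply/andP; split; lra)) (ltac:(apply/andP; split; lra)).
  rewrite !myA_neg !myG_neg => /(_ EA); lra.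
- move: EG; rewrite -y10 myG_0 => EG.
  have y20 : y2 = 0.
    have [h|h|//] := ltgtP 0 y2.
      by have := @myG_pos _ t r2 y2 ht r20; rewrite h b2 /= => /(_ isT); lra.
    by have := @myG_negv _ t r2 y2 ht r20; rewrite a2 h /= => /(_ isT); lra.
  move: EA; rewrite -y10 y20 => EA.
  have := @mono_r _ t r1 r2 0 ht (ltac:(apply/andP; split; lra)) r10 r12; lra.
Qed.

Lemma noLt {R : realType} (t r1 r2 y1 y2 : R) : 0 <= t <= 1 -> 0 < r1 -> r1 < r2 ->
  -(pi/2) < y1 < pi/2 -> -(pi/2) < y2 < pi/2 ->
  Af t r1 y1 = Af t r2 y2 -> Gf t r1 y1 = Gf t r2 y2 -> False.
Proof.
move=> ht r10 r12 h1 h2 EA EG.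
have r20 : 0 < r2 by lra.
have [r1g|r1l|r1e] := ltgtP 1 r1.
- exact: noLt1 ht r1g r12 h1 h2 EA EG.
- have a1 := myA_negv ht h1 r10 r1l.
  have r2l : r2 < 1.
    rewrite ltNge; apply/negP => h; move: h; rewrite le_eqVlt => /orP[/eqP e|h].
      by move: EA; rewrite -e myA_1; lra.
    by have := myA_pos ht h2 h; lra.
  have i1 : 1 < r2^-1 by rewrite invf_gt1.
  apply: (@noLt1 _ t r2^-1 r1^-1 y2 y1 ht i1 (inv_lt r10 r12) h2 h1).
    by rewrite !myA_inv // EA.
  by rewrite !myG_inv EG.
- move: EA; rewrite -r1e myA_1 => EA.
  have := myA_pos ht h2 (ltac:(lra) : 1 < r2); lra.
Qed.

Lemma AG_inj {R : realType} (t r1 r2 y1 y2 : R) : 0 <= t <= 1 -> 0 < r1 -> 0 < r2 ->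
  -(pi/2) < y1 < pi/2 -> -(pi/2) < y2 < pi/2 ->
  Af t r1 y1 = Af t r2 y2 -> Gf t r1 y1 = Gf t r2 y2 -> r1 = r2 /\ y1 = y2.
Proof.
move=> ht r10 r20 h1 h2 EA EG.
have [r12|r21|re] := ltgtP r1 r2.
- by case: (noLt ht r10 r12 h1 h2 EA EG).
- by case: (noLt ht r20 r21 h2 h1 (esym EA) (esym EG)).
split => //; move: EG; rewrite re => EG.
have [y12|y21|//] := ltgtP y1 y2.
- by have := mono_y ht r20 h1 h2 y12; lra.
- by have := mono_y ht r20 h2 h1 y21; lra.
Qed.

Local Open Scope complex_scope.
Lemma ReM {R : realType} (x y : R[i]) : complex.Re (x * y) = complex.Re x * complex.Re y - complex.Im x * complex.Im y.
Proof. by case: x => a b; case: y => c d. Qed.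
Lemma ImM {R : realType} (x y : R[i]) : complex.Im (x * y) = complex.Re x * complex.Im y + complex.Im x * complex.Re y.
Proof. by case: x => a b; case: y => c d. Qed.
Lemma ReV {R : realType} (x : R[i]) : complex.Re (x^-1) = complex.Re x / (complex.Re x ^+ 2 + complex.Im x ^+ 2).
Proof. by case: x => a b. Qed.
Lemma ImV {R : realType} (x : R[i]) : complex.Im (x^-1) = - (complex.Im x / (complex.Re x ^+ 2 + complex.Im x ^+ 2)).
Proof. by case: x => a b. Qed.
Lemma ReD {R : realType} (x y : R[i]) : complex.Re (x + y) = complex.Re x + complex.Re y. Proof. by case: x => a b; case: y. Qed.
Lemma ImD {R : realType} (x y : R[i]) : complex.Im (x + y) = complex.Im x + complex.Im y. Proof. by case: x => a b; case: y. Qed.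
Lemma ReN {R : realType} (x : R[i]) : complex.Re (- x) = - complex.Re x. Proof. by case: x. Qed.
Lemma ImN {R : realType} (x : R[i]) : complex.Im (- x) = - complex.Im x. Proof. by case: x. Qed.
Lemma ReJ {R : realType} (x : R[i]) : complex.Re (x^*) = complex.Re x. Proof. by case: x. Qed.
Lemma ImJ {R : realType} (x : R[i]) : complex.Im (x^*) = - complex.Im x. Proof. by case: x. Qed.
Lemma ReC {R : realType} (r : R) : complex.Re (r%:C) = r. Proof. by []. Qed.
Lemma ImC {R : realType} (r : R) : complex.Im (r%:C) = 0. Proof. by []. Qed.
Lemma Rei {R : realType} : complex.Re 'i = 0 :> R. Proof. by []. Qed.
Lemma Imi {R : realType} : complex.Im 'i = 1 :> R. Proof. by []. Qed.
Lemma Re1 {R : realType} : complex.Re 1 = 1 :> R. Proof. by []. Qed.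
Lemma Im1 {R : realType} : complex.Im 1 = 0 :> R. Proof. by []. Qed.
Lemma Ren {R : realType} n : complex.Re (n%:R) = n%:R :> R.
Proof. elim: n => // n IH; by rewrite -addn1 !natrD ReD IH. Qed.
Lemma Imn {R : realType} n : complex.Im (n%:R) = 0 :> R.
Proof. elim: n => // n IH; by rewrite -addn1 !natrD ImD IH addr0. Qed.
Notation simpRI := (ReD, ImD, ReM, ImM, ReN, ImN, ReJ, ImJ, ReV, ImV, ReC, ImC, Rei, Imi, Ren, Imn, Re1, Im1).

Lemma cn {R : realType} (n : nat) : (n%:R : R[i]) = (n%:R : R)%:C.
Proof. by rewrite rmorph_nat. Qed.
Lemma c4 {R : realType} : (4^-1 : R[i]) = (4^-1 : R)%:C.
Proof. rewrite rmorphV ?unitfE ?pnatr_eq0 //; congr (_^-1); apply/eqP; rewrite eq_complex /=; apply/andP; split; apply/eqP; rewrite -?[Algebra.hasZero.zero _]/(0:R); lra. Qed.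
Lemma c2 {R : realType} : (2^-1 : R[i]) = (2^-1 : R)%:C.
Proof. rewrite rmorphV ?unitfE ?pnatr_eq0 //; congr (_^-1); apply/eqP; rewrite eq_complex /=; apply/andP; split; apply/eqP; rewrite -?[Algebra.hasZero.zero _]/(0:R); lra. Qed.
Lemma ci4 {R : realType} : ('i / 4%:R : R[i]) = (0 : R) +i* (4^-1 : R).
Proof. by rewrite [_ / _]mulrC c4; simpc. Qed.
Lemma ReMC {R : realType} (k : R) (w : R[i]) : complex.Re (k%:C * w) = k * complex.Re w.
Proof. by case: w => a b /=; rewrite mul0r subr0. Qed.
Lemma ImMC {R : realType} (k : R) (w : R[i]) : complex.Im (k%:C * w) = k * complex.Im w.
Proof. by case: w => a b /=; rewrite mul0r addr0. Qed.
Lemma ReMI {R : realType} (k : R) (w : R[i]) : complex.Re ((0 +i* k) * w) = - (k * complex.Im w).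
Proof. by case: w => a b /=; rewrite mul0r sub0r. Qed.
Lemma ImMI {R : realType} (k : R) (w : R[i]) : complex.Im ((0 +i* k) * w) = k * complex.Re w.
Proof. by case: w => a b /=; rewrite mul0r add0r. Qed.

Lemma Re_ft {R : realType} (t : R) (z : R[i]) : complex.Re (f_t t z) =
  (1 - t) / 2 * complex.Im (L2 z) + t / 2 * complex.Re (L1 z).
Proof.
rewrite /f_t /fD /fC /hD /gD /hC /gC.
move: (L1 z) (L2 z) (z / (1 - z ^+ 2)) => a b c.
rewrite ci4 c4 c2 !(ReD, ImD, ReN, ImN, ReJ, ImJ, ReMC, ImMC, ReMI, ImMI).
by field.
Qed.
Lemma Im_ft {R : realType} (t : R) (z : R[i]) : complex.Im (f_t t z) =
  (1 - t) / 2 * complex.Im (L1 z) + t * complex.Im (z / (1 - z ^+ 2)).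
Proof.
rewrite /f_t /fD /fC /hD /gD /hC /gC.
move: (L1 z) (L2 z) (z / (1 - z ^+ 2)) => a b c.
rewrite ci4 c4 c2 !(ReD, ImD, ReN, ImN, ReJ, ImJ, ReMC, ImMC, ReMI, ImMI).
by field.
Qed.
Lemma Re_Clog {R : realType} (w : R[i]) : complex.Re (Clog w) =
  ln (Num.sqrt (complex.Re w ^+ 2 + complex.Im w ^+ 2)).
Proof. rewrite /Clog !simpRI; rewrite -?[Algebra.hasZero.zero _]/(0:R); lra. Qed.
Lemma Im_Clog {R : realType} (w : R[i]) : complex.Im (Clog w) = Arg w.
Proof. rewrite /Clog !simpRI; rewrite -?[Algebra.hasZero.zero _]/(0:R); lra. Qed.
Lemma Arg_pos {R : realType} (w : R[i]) : 0 < complex.Re w -> Arg w = atan (complex.Im w / complex.Re w).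
Proof. by move=> h; rewrite /Arg h. Qed.

Lemma ImL2p {R : realType} (a b : R) : 0 < a ->
  complex.Im (Clog ((1 + 'i * (a +i* b)) / ((a +i* b) + 'i))) =
  atan ((a ^+ 2 + b ^+ 2 - 1) / (2 * a)).
Proof.
move=> a0; rewrite Im_Clog Arg_pos; last first.
  rewrite !simpRI /=; rewrite -?[Algebra.hasZero.zero _]/(0:R).
  rewrite ?(mul0r, mulr0, add0r, addr0, mul1r, sub0r).
  have hD : 0 < a ^+ 2 + (b + 1) ^+ 2 by apply: ltr_pwDl; [exact: exprn_gt0|exact: sqr_ge0].
  rewrite mulrN opprK !mulrA -mulrDl; apply: divr_gt0 => //; nra.
congr atan. rewrite !simpRI /=; rewrite -?[Algebra.hasZero.zero _]/(0:R).
have hD : (a + (0:R)) ^+ 2 + (b + 1) ^+ 2 != 0.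
  rewrite addr0; apply: lt0r_neq0; apply: ltr_pwDl; [exact: exprn_gt0|exact: sqr_ge0].
rewrite ?(mul0r, mulr0, add0r, addr0, mul1r, sub0r) in hD *.
field; apply/and3P; split => //; first by rewrite lt0r_neq0.
apply: lt0r_neq0; nra.
Qed.
Lemma neq0_Re {R : realType} (w : R[i]) : complex.Re w != 0 -> w != 0.
Proof. by apply: contraNN => /eqP ->. Qed.
Lemma neq0_Im {R : realType} (w : R[i]) : complex.Im w != 0 -> w != 0.
Proof. by apply: contraNN => /eqP ->. Qed.

Lemma disk_sq {R : realType} (z : R[i]) : `|z| < 1 -> complex.Re z ^+ 2 + complex.Im z ^+ 2 < 1.
Proof.
case: z => x y; rewrite normc_def /= ltcR => h.
have h0 : 0 <= x ^+ 2 + y ^+ 2 by apply: addr_ge0; exact: sqr_ge0.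
by rewrite -(sqr_sqrtr h0) -[1](expr1n _ 2) ltrXn2r // sqrtr_ge0.
Qed.

Ltac clean0 R := rewrite -?[Algebra.hasZero.zero _]/(0:R) ?(mul0r, mulr0, add0r, addr0, mul1r, mulr1, sub0r, subr0).

Lemma disk_data {R : realType} (z : R[i]) : `|z| < 1 ->
  let zeta := (1 + z) / (1 - z) in
  0 < complex.Re zeta /\ z = (zeta - 1) / (zeta + 1) /\
  (1 + 'i * z) / (1 - 'i * z) = (1 + 'i * zeta) / (zeta + 'i) /\
  z / (1 - z ^+ 2) = (zeta - zeta^-1) / 4.
Proof.
move=> hz zeta; have h := disk_sq hz.
set x := complex.Re z in h; set y := complex.Im z in h.
have hx : x < 1 by nra.
have hx' : -1 < x by nra.
have hy : y < 1 by nra.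
have hy' : -1 < y by nra.
have n1 : 1 - z != 0 by apply: neq0_Re; rewrite !simpRI; clean0 R; apply/eqP; lra.
have n2 : 1 + z != 0 by apply: neq0_Re; rewrite !simpRI; clean0 R; apply/eqP; lra.
have n3 : 1 - 'i * z != 0 by apply: neq0_Re; rewrite !simpRI; clean0 R; apply/eqP; lra.
have hRe : 0 < complex.Re zeta.
  rewrite /zeta !simpRI; clean0 R; rewrite -/x -/y.
  have hD : 0 < (1 - x) ^+ 2 + (- y) ^+ 2 by apply: ltr_pwDl; [apply: exprn_gt0; lra|exact: sqr_ge0].
  rewrite [X in 0 < X](_ : _ = (1 - x ^+ 2 - y ^+ 2) / ((1 - x) ^+ 2 + (- y) ^+ 2)).
    by apply: divr_gt0 => //; lra.
  by field; rewrite lt0r_neq0.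
split => //.
have n4 : zeta + 'i != 0 by apply: neq0_Re; rewrite ReD Rei addr0; apply/eqP; lra.
have n5 : zeta != 0 by apply: neq0_Re; apply/eqP; lra.
split.
  rewrite /zeta; field; rewrite n1 /=; apply: neq0_Re; rewrite !simpRI; clean0 R; apply/eqP; lra.
split.
  have E : (1 + 'i * z) / (1 - 'i * z) - (1 + 'i * zeta) / (zeta + 'i) =
    (1 + 'i ^+ 2) * (2 * z / ((1 - 'i * z) * (zeta + 'i) * (1 - z))).
    have n6 : 1 + z + 'i * (1 - z) != 0.
      have -> : 1 + z + 'i * (1 - z) = (zeta + 'i) * (1 - z) by rewrite /zeta; field.
      by rewrite mulf_neq0.
    by rewrite /zeta; field; rewrite n1 n6 n3.
  by move: E; rewrite sqr_i addrN mul0r => /eqP; rewrite subr_eq0 => /eqP.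
rewrite /zeta; field; rewrite n1 n2 /=.
have -> : 1 - z ^+ 2 = (1 - z) * (1 + z) by ring.
by rewrite mulf_neq0.
Qed.

Lemma Im_quarter {R : realType} (a b : R) : 0 < a ->
  complex.Im (((a +i* b) - (a +i* b)^-1) / 4) = (b + b / (a ^+ 2 + b ^+ 2)) / 4.
Proof.
move=> a0; rewrite !simpRI /=; rewrite -?[Algebra.hasZero.zero _]/(0:R) ?oppr0 ?mulr0 ?add0r.
have h : 0 < a ^+ 2 + b ^+ 2 by apply: ltr_pwDl; [exact: exprn_gt0|exact: sqr_ge0].
by field; rewrite lt0r_neq0.
Qed.

Lemma cos_sin_atan {R : realType} (a b : R) : 0 < a ->
  cos (atan (b / a)) = a / Num.sqrt (a ^+ 2 + b ^+ 2) /\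
  sin (atan (b / a)) = b / Num.sqrt (a ^+ 2 + b ^+ 2).
Proof.
move=> a0.
have N0 : 0 < a ^+ 2 + b ^+ 2 by apply: ltr_pwDl; [exact: exprn_gt0|exact: sqr_ge0].
set r := Num.sqrt (a ^+ 2 + b ^+ 2).
have r0 : 0 < r by rewrite sqrtr_gt0.
have r2 : r ^+ 2 = a ^+ 2 + b ^+ 2 by rewrite sqr_sqrtr // ltW.
have hc : cos (atan (b / a)) = a / r.
  rewrite cos_atan.
  have -> : 1 + (b / a) ^+ 2 = (r / a) ^+ 2 by rewrite !expr_div_n r2; field; rewrite lt0r_neq0.
  rewrite sqrtr_sqr ger0_norm; last by apply: divr_ge0; apply: ltW.
  by rewrite invf_div.
split => //.
have cn : cos (atan (b / a)) != 0 by rewrite hc; apply: lt0r_neq0; apply: divr_gt0.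
have := atanK (b / a); rewrite /tan => h.
have -> : sin (atan (b / a)) = sin (atan (b / a)) / cos (atan (b / a)) * cos (atan (b / a)).
  by rewrite divfK.
by rewrite h hc; field; rewrite !lt0r_neq0.
Qed.

Lemma repr_ft {R : realType} (t : R) (z : R[i]) : `|z| < 1 ->
  exists r y, [/\ 0 < r, -(pi/2) < y < pi/2,
    2 * complex.Re (f_t t z) = Af t r y, 2 * complex.Im (f_t t z) = Gf t r y &
    z = (((r * cos y) +i* (r * sin y)) - 1) / (((r * cos y) +i* (r * sin y)) + 1)].
Proof.
move=> hz; have [ha [hz1 [hw hq]]] := disk_data hz.
rewrite Re_ft Im_ft /L1 /L2 hw hq.
move: ha hz1; move: ((1 + z) / (1 - z)) => [a b] a0 ->; simpl in a0.
have N0 : 0 < a ^+ 2 + b ^+ 2 by apply: ltr_pwDl; [exact: exprn_gt0|exact: sqr_ge0].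
set r := Num.sqrt (a ^+ 2 + b ^+ 2).
have r0 : 0 < r by rewrite sqrtr_gt0.
have r2 : r ^+ 2 = a ^+ 2 + b ^+ 2 by rewrite sqr_sqrtr // ltW.
have [hc hs] := cos_sin_atan b a0; rewrite -/r in hc hs.
exists r, (atan (b / a)); split.
- done.
- by rewrite atan_gtNpi2 atan_ltpi2.
- rewrite ImL2p // Re_Clog /= -/r /Af hc.
  have -> : (r - r^-1) / (2 * (a / r)) = (a ^+ 2 + b ^+ 2 - 1) / (2 * a).
    by rewrite -r2; field; rewrite !lt0r_neq0.
  by field.
- rewrite Im_quarter // Im_Clog Arg_pos //= /Gf hs.
  rewrite -r2; field; rewrite !lt0r_neq0 //.
- have e1 : r * (a / r) = a by rewrite mulrC divfK // lt0r_neq0.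
  have e2 : r * (b / r) = b by rewrite mulrC divfK // lt0r_neq0.
  by rewrite hc hs e1 e2.
Qed.

Theorem mainTheorem5 (R : realType) (t : R) :
  0 <= t <= 1 -> univalent_on_disk (f_t t).
Proof.
move=> ht z1 z2 h1 h2 E.
have [r1 [y1 [r10 hy1 A1 G1 Z1]]] := repr_ft t h1.
have [r2 [y2 [r20 hy2 A2 G2 Z2]]] := repr_ft t h2.
have [er ey] : r1 = r2 /\ y1 = y2.
  apply: (AG_inj ht r10 r20 hy1 hy2).
    by rewrite -A1 -A2 E.
  by rewrite -G1 -G2 E.
by rewrite Z1 Z2 er ey.
Qed.
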